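(* Assume the standing setting and hypothesis (H) below. Let $y\in S$ and let $z\in\mathcal{X}$ be its $\varepsilon$-representative. Then for every pattern $\pi\in U^k$ and every $t\in[0,k\tau]$, $$\|Y^{\pi}_{t,y}-\tilde{Y}^{\pi}_{t,z}\|\le\varepsilon.$$
   Context: Setting. Fix integers $M,k\ge1$, reals $L>0$, $\sigma>0$, $\tau>0$, $\varepsilon>0$; $h=L/(M+1)$, $S=[0,1]^M$, Euclidean norm $\|\cdot\|$ and inner product $\langle\cdot,\cdot\rangle$. $\mathcal{L}_h=\frac1{h^2}\mathrm{tridiag}(1,-2,1)$ ($M\times M$). $U\subset[0,1]^2$ is a finite set of modes; for $u=(u_0,u_L)$, $\varphi_h(u)=\frac1{h^2}(u_0,0,\dots,0,u_L)^\top$. A map $f:\mathbb{R}^M\to\mathbb{R}^M$ is given and $f_u(y)=\sigma\mathcal{L}_hy+\sigma\varphi_h(u)+f(y)$, assumed Lipschitz on $S$ with constant $L_u$. $\lambda_u$ is the OSL constant of $f_u$ on $S$ (smallest constant with $\langle f_u(y_1)-f_u(y_2),y_1-y_2\rangle\le\lambda_u\|y_1-y_2\|^2$ for all $y_1,y_2\in S$), and $C_u=\sup_{y\in S}L_u\|f_u(y)\|$. Trajectories. For a pattern $\pi=u_k\cdots u_1\in U^k$ and $y\in S$, $Y^\pi_{t,y}$ ($t\in[0,k\tau]$) is the continuous solution of $dy/dt=f_{u_k}(y)$ on $[0,\tau)$ with $Y^\pi_{0,y}=y$, continued by the solution of $dy/dt=f_{u_{k-1}}(y)$ on $[\tau,2\tau)$,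 and so on up to $f_{u_1}$ on $[(k-1)\tau,k\tau]$. The Euler image is $\tilde Y^u_{t,z}=z+tf_u(z)$ for $t\in[0,\tau]$, and for a pattern $\tilde Y^\pi_{t,z}=\tilde Y^{u_k}_{t,z}$ for $t\in[0,\tau]$ and $\tilde Y^{\pi}_{t,z}=\tilde Y^{u_{k-1}\cdots u_1}_{t-\tau,\tilde Y^{u_k}_{\tau,z}}$ for $t\in[\tau,k\tau]$. It is assumed that all these exact and Euler trajectories remain in $S$. Grid. $K$ is an integer with $K\ge\sqrt{M}/(2\varepsilon)$; $[0,1]$ is split into $K$ equal subintervals, hence $S$ into $K^M$ equal cubic cells; $\mathcal{X}$ is the set of cell centers. The $\varepsilon$-representative of $y\in S$ is the center of a (fixed choice of) cell containing $y$, so $\|y-z\|\le\varepsilon$. Hypothesis (H). For each $u\in U$ let $G_u=\sqrt3\,\varepsilon|\lambda_u|/C_u$ and $\alpha_u=1+\frac{|\lambda_u|G_u}{4}-\sqrt{1+(\lambda_uG_u/4)^2}$. (H) requires, for all $u\in U$: $\lambda_u<0$, $\frac{|\lambda_u|G_u}{4}<1$, and $\tau\le G_u(1-\alpha_u)$. *)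

(* Defs.v *)
From Stdlib Require Import Reals List.
From mathcomp Require Import all_boot.
Set Implicit Arguments.
Unset Strict Implicit.
Open Scope R_scope.

Definition vec (M : nat) := 'I_M -> R.

Definition vadd {M} (x y : vec M) : vec M := fun i => x i + y i.
Definition vsub {M} (x y : vec M) : vec M := fun i => x i - y i.
Definition vscale {M} (a : R) (x : vec M) : vec M := fun i => a * x i.

Definition vdot {M} (x y : vec M) : R := \big[Rplus/0]_(i < M) (x i * y i).
Definition vnorm {M} (x : vec M) : R := sqrt (vdot x x).

(* coordinate j (0-based, as a nat) of x, and 0 outside {0..M-1} *)
Definition vget {M} (x : vec M) (j : nat) : R :=
  match @insub nat (fun n => (n < M)%N) 'I_M j with
  | Some i => x i
  | None => 0
  end.

Definition inS {M} (y : vec M) : Prop := forall i, 0 <= y i <= 1.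

(* L_h = (1/h^2) tridiag(1,-2,1) *)
Definition Lh {M} (h : R) (y : vec M) : vec M := fun i =>
  ((if (nat_of_ord i == 0)%N then 0 else vget y (nat_of_ord i).-1)
   - 2 * y i + vget y (nat_of_ord i).+1) / (h * h).

(* modes u = (u_0, u_L); phi_h(u) = (1/h^2) (u_0, 0, ..., 0, u_L)^T *)
Definition mode := (R * R)%type.
Definition phih {M} (h : R) (u : mode) : vec M := fun i =>
  ((if (nat_of_ord i == 0)%N then fst u else 0)
   + (if (nat_of_ord i == M.-1)%N then snd u else 0)) / (h * h).

Definition fu {M} (h sigma : R) (f : vec M -> vec M) (u : mode) (y : vec M)
  : vec M :=
  vadd (vadd (vscale sigma (Lh h y)) (vscale sigma (phih h u))) (f y).

Definition lipschitz_on_S {M} (g : vec M -> vec M) (Lc : R) : Prop :=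
  forall y1 y2, inS y1 -> inS y2 ->
    vnorm (vsub (g y1) (g y2)) <= Lc * vnorm (vsub y1 y2).

Definition osl_on_S {M} (g : vec M -> vec M) (c : R) : Prop :=
  forall y1 y2, inS y1 -> inS y2 ->
    vdot (vsub (g y1) (g y2)) (vsub y1 y2) <= c * (vnorm (vsub y1 y2))^2.

Definition is_OSL_constant {M} (g : vec M -> vec M) (lam : R) : Prop :=
  osl_on_S g lam /\ (forall c, osl_on_S g c -> lam <= c).

Definition is_C_constant {M} (g : vec M -> vec M) (Lc Cc : R) : Prop :=
  is_lub (fun r => exists y, inS y /\ r = Lc * vnorm (g y)) Cc.

Definition G_u (eps lam Cc : R) : R := sqrt 3 * eps * Rabs lam / Cc.
Definition alpha_u (lam G : R) : R :=
  1 + Rabs lam * G / 4 - sqrt (1 + (lam * G / 4)^2).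

(* A pattern pi = u_k ... u_1 is represented by the list [u_k; ...; u_1]
   (head = first mode applied). *)
Definition pattern_in (U : list mode) (k : nat) (pi : list mode) : Prop :=
  length pi = k /\ (forall u, In u pi -> In u U).

(* Exact trajectory Y^pi_{t,y}, t in [0, k tau]: continuous on [0,k tau],
   Y 0 = y, and on the j-th piece [j tau, (j+1) tau) (j = 0..k-1) it solves
   dy/dt = f_{nth j pi}(y) (derivative required on the open piece; together
   with continuity this is the usual notion of the continued solution). *)
Definition exact_traj {M} (fU : mode -> vec M -> vec M) (tau : R)
  (pi : list mode) (y : vec M) (Y : R -> vec M) : Prop :=
  let k := length pi in
  Y 0 = y /\
  (forall t, 0 <= t <= INR k * tau -> forall i,
      limit1_in (fun s => Y s i) (fun s => 0 <= s <= INR k * tau) (Y t i) t) /\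
  (forall (j : nat) t, (j < k)%nat -> INR j * tau < t < INR (S j) * tau ->
     forall i, derivable_pt_lim (fun s => Y s i) t
                 (fU (List.nth j pi (0, 0)) (Y t) i)).

Fixpoint euler_traj {M} (fU : mode -> vec M -> vec M) (tau : R)
  (pi : list mode) (t : R) (z : vec M) : vec M :=
  match pi with
  | nil => z
  | u :: rest =>
      if Rle_dec t tau then vadd z (vscale t (fU u z))
      else euler_traj fU tau rest (t - tau) (vadd z (vscale tau (fU u z)))
  end.

(* Grid: [0,1] split into K equal subintervals; cell centers *)
Definition is_center {M} (K : nat) (z : vec M) : Prop :=
  forall i, exists m : nat, (m < K)%nat /\ z i = (2 * INR m + 1) / (2 * INR K).

Definition in_cell {M} (K : nat) (z y : vec M) : Prop :=
  forall i, z i - 1 / (2 * INR K) <= y i <= z i + 1 / (2 * INR K).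

Definition is_representative {M} (K : nat) (y z : vec M) : Prop :=
  is_center K z /\ in_cell K z y.

(* Main.v *)
Require Import Defs.
Set Warnings "-notation-overridden -ambiguous-paths".
From Stdlib Require Import Reals List Lra Psatz FunctionalExtensionality.
From mathcomp Require Import all_boot.
Require Coquelicot.Coquelicot.
Open Scope R_scope.


Section Sums.
Variable I : Type.
Implicit Types (r : seq I) (F G : I -> R).

Lemma bs_add r F G : \big[Rplus/0]_(i <- r) (F i + G i) =
  \big[Rplus/0]_(i <- r) F i + \big[Rplus/0]_(i <- r) G i.
Proof. elim: r => [|x r IH]; rewrite ?big_nil ?big_cons; [lra| rewrite IH; lra]. Qed.

Lemma bs_sub r F G : \big[Rplus/0]_(i <- r) (F i - G i) =
  \big[Rplus/0]_(i <- r) F i - \big[Rplus/0]_(i <- r) G i.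
Proof. elim: r => [|x r IH]; rewrite ?big_nil ?big_cons; [lra| rewrite IH; lra]. Qed.

Lemma bs_scal r c F : \big[Rplus/0]_(i <- r) (c * F i) = c * \big[Rplus/0]_(i <- r) F i.
Proof. elim: r => [|x r IH]; rewrite ?big_nil ?big_cons; [lra| rewrite IH; lra]. Qed.

Lemma bs_le r F G : (forall i, F i <= G i) ->
  \big[Rplus/0]_(i <- r) F i <= \big[Rplus/0]_(i <- r) G i.
Proof. move=> H; elim: r => [|x r IH]; rewrite ?big_nil ?big_cons; [lra| have := H x; lra]. Qed.

Lemma bs_ge0 r F : (forall i, 0 <= F i) -> 0 <= \big[Rplus/0]_(i <- r) F i.
Proof. move=> H; elim: r => [|x r IH]; rewrite ?big_nil ?big_cons; [lra| have := H x; lra]. Qed.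

Lemma bs_deriv r (F D : I -> R -> R) t :
  (forall i, derivable_pt_lim (F i) t (D i t)) ->
  derivable_pt_lim (fun s => \big[Rplus/0]_(i <- r) F i s) t (\big[Rplus/0]_(i <- r) D i t).
Proof.
move=> H; elim: r => [|x r IH].
- rewrite big_nil. have -> : (fun s => \big[Rplus/0]_(i <- [::]) F i s) = fun _ => 0.
    by apply functional_extensionality => s; rewrite big_nil.
  exact: derivable_pt_lim_const.
- rewrite big_cons.
  have -> : (fun s => \big[Rplus/0]_(i <- x :: r) F i s) =
            (fun s => F x s + \big[Rplus/0]_(i <- r) F i s).
    by apply functional_extensionality => s; rewrite big_cons.
  exact: (derivable_pt_lim_plus (F x) _ t _ _ (H x) IH).
Qed.

Lemma bs_lim r (F : I -> R -> R) (P : R -> Prop) t :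
  (forall i, limit1_in (F i) P (F i t) t) ->
  limit1_in (fun s => \big[Rplus/0]_(i <- r) F i s) P (\big[Rplus/0]_(i <- r) F i t) t.
Proof.
move=> H; elim: r => [|x r IH].
- rewrite big_nil. have -> : (fun s => \big[Rplus/0]_(i <- [::]) F i s) = fun _ => 0.
    by apply functional_extensionality => s; rewrite big_nil.
  exact: (limit_free (fun _ => 0) P 0 t).
- rewrite big_cons.
  have -> : (fun s => \big[Rplus/0]_(i <- x :: r) F i s) =
            (fun s => F x s + \big[Rplus/0]_(i <- r) F i s).
    by apply functional_extensionality => s; rewrite big_cons.
  exact: limit_plus.
Qed.
End Sums.

Lemma bs_const (M : nat) c : \big[Rplus/0]_(i < M) c = INR M * c.
Proof.
rewrite big_const_ord. elim: M => [|n IH]; first by simpl; lra.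
rewrite S_INR. change (c + iter n (Rplus c) 0 = (INR n + 1) * c). rewrite IH. lra.
Qed.


Lemma real_cs v X Y : 0 <= X -> 0 <= Y ->
  (forall t, 0 < t -> 2 * v <= t * X + Y / t) -> v <= sqrt X * sqrt Y.
Proof.
move=> HX HY H.
have sX := sqrt_sqrt X HX. have sY := sqrt_sqrt Y HY.
have pX := sqrt_pos X. have pY := sqrt_pos Y.
set a := sqrt X in sX pX *. set b := sqrt Y in sY pY *.
rewrite -sX -sY in H. clearbody a b.
case: (Rle_lt_or_eq_dec 0 a pX) => hx; case: (Rle_lt_or_eq_dec 0 b pY) => hy.
- have := H (b / a) (Rdiv_lt_0_compat _ _ hy hx).
  have -> : b / a * (a * a) = a * b by field; lra.
  have -> : b * b / (b / a) = a * b by field; lra.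
  lra.
- rewrite -hy Rmult_0_r. apply Rnot_lt_le => hv.
  have ht : 0 < v / (a * a + 1) by apply Rdiv_lt_0_compat; nra.
  have := H _ ht. rewrite -hy Rmult_0_r /Rdiv Rmult_0_l Rplus_0_r.
  have : v * / (a*a+1) * (a * a) < v.
    have -> : v * / (a*a+1) * (a*a) = v - v / (a*a+1) by field; nra.
    have : 0 < v / (a*a+1) by apply Rdiv_lt_0_compat; nra.
    lra.
  lra.
- rewrite -hx Rmult_0_l. apply Rnot_lt_le => hv.
  have ht : 0 < b * b / v + 1.
    have : 0 <= b*b/v by apply Rmult_le_pos; [nra| left; apply Rinv_0_lt_compat; lra].
    lra.
  have := H _ ht. rewrite -hx Rmult_0_r Rmult_0_r Rplus_0_l => h.
  have : 2 * v * (b * b / v + 1) <= b * b.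
    apply (Rmult_le_reg_r (/ (b * b / v + 1))). by apply Rinv_0_lt_compat.
    rewrite Rmult_assoc Rinv_r; last lra. rewrite Rmult_1_r. exact h.
  have -> : 2 * v * (b * b / v + 1) = 2 * (b * b) + 2 * v by field; lra.
  nra.
- rewrite -hx -hy. apply Rnot_lt_le => hv.
  have := H 1 Rlt_0_1. rewrite -hx -hy. lra.
Qed.

Section Vec.
Variable M : nat.
Implicit Types (x y p q : vec M).

Lemma vdot_sym x y : vdot x y = vdot y x.
Proof. rewrite /vdot; apply eq_bigr => i _; ring. Qed.

Lemma vdot_ge0 x : 0 <= vdot x x.
Proof. rewrite /vdot; apply bs_ge0 => i; nra. Qed.

Lemma vnorm_ge0 x : 0 <= vnorm x.
Proof. exact: sqrt_pos. Qed.

Lemma vnorm_sq x : vnorm x * vnorm x = vdot x x.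
Proof. rewrite /vnorm sqrt_sqrt //; exact: vdot_ge0. Qed.

Lemma vdot_sub_r e p q : vdot e (vsub p q) = vdot e p - vdot e q.
Proof.
rewrite /vdot -bs_sub; apply eq_bigr => i _; rewrite /vsub; ring.
Qed.

Lemma vdot_scale x a y : vdot (vscale a x) (vscale a y) = a * a * vdot x y.
Proof. rewrite /vdot -bs_scal; apply eq_bigr => i _; rewrite /vscale; ring. Qed.

Lemma vnorm_scale a x : vnorm (vscale a x) = Rabs a * vnorm x.
Proof.
rewrite /vnorm vdot_scale sqrt_mult_alt; last by nra.
by rewrite -(sqrt_Rsqr_abs a).
Qed.

Lemma vcs x y : vdot x y <= vnorm x * vnorm y.
Proof.
apply real_cs; try exact: vdot_ge0.
move=> t ht. rewrite /vdot /Rdiv -(bs_scal _ _ 2) -(bs_scal _ _ t) [_ * / t]Rmult_comm -(bs_scal _ _ (/t)) -bs_add.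
apply bs_le => i.
have : 0 <= (t * x i - y i) * (t * x i - y i) / t.
  rewrite /Rdiv; apply Rmult_le_pos; [apply Rle_0_sqr| left; apply Rinv_0_lt_compat; exact ht].
have -> : (t * x i - y i) * (t * x i - y i) / t = t * (x i * x i) - 2 * (x i * y i) + y i * y i * / t by field; lra.
lra.
Qed.
End Vec.


Lemma vadd_scale0 M (z v : vec M) : vadd z (vscale 0 v) = z.
Proof. apply functional_extensionality => i; rewrite /vadd /vscale; ring. Qed.

Lemma euler_at0 M (fU : mode -> vec M -> vec M) tau pi z :
  0 < tau -> euler_traj fU tau pi 0 z = z.
Proof.
move=> ht; case: pi => [|u rest] //=.
case: (Rle_dec 0 tau) => h; last lra. exact: vadd_scale0.
Qed.

Lemma euler_piece M (fU : mode -> vec M -> vec M) tau pi : 0 < tau ->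
  forall z j s, (j < length pi)%nat -> INR j * tau <= s <= INR (S j) * tau ->
  euler_traj fU tau pi s z =
  vadd (euler_traj fU tau pi (INR j * tau) z)
       (vscale (s - INR j * tau) (fU (List.nth j pi (0, 0)) (euler_traj fU tau pi (INR j * tau) z))).
Proof.
move=> ht; elim: pi => [|u rest IH] z j s hj hs.
- by [].
- case: j hj hs => [|j'] hj hs.
  + rewrite /= Rmult_0_l Rminus_0_r in hs *.
    case: (Rle_dec s tau) => h1; last lra.
    case: (Rle_dec 0 tau) => h2; last lra.
    by rewrite vadd_scale0.
  + have hj' : (j' < length rest)%nat by [].
    have e1 : INR (S j') * tau = INR j' * tau + tau by rewrite S_INR; ring.
    have hj0 : 0 <= INR j' by apply pos_INR.
    have HE : euler_traj fU tau (u :: rest) (INR (S j') * tau) z =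
              euler_traj fU tau rest (INR j' * tau) (vadd z (vscale tau (fU u z))).
    { rewrite /=. case: (Rle_dec (INR (S j') * tau) tau) => h.
      - have hj0' : j' = 0%nat.
          case: j' {hj hs hj' e1 hj0 h IH} (h) => // n.
          rewrite S_INR S_INR => h'. have := pos_INR n. nra.
        subst j'. rewrite /= Rmult_0_l euler_at0 //.
        by rewrite /= Rmult_1_l.
      - by have -> : INR (S j') * tau - tau = INR j' * tau by rewrite e1; ring. }
    rewrite HE; simpl List.nth; rewrite [euler_traj _ _ (u :: rest) s z]/=.
    case: (Rle_dec s tau) => h1.
    * have hj0' : j' = 0%nat.
        case: j' {hj hs hj' e1 hj0 HE IH} (hs) => // n.
        rewrite S_INR S_INR => h'. have := pos_INR n. nra.
      subst j'. have es : s = tau by rewrite /= in hs; lra.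
      subst s. rewrite /= Rmult_0_l euler_at0 //.
      have -> : tau - 1 * tau = 0 by ring.
      by rewrite vadd_scale0.
    * rewrite (IH _ j' (s - tau) hj'); last by rewrite e1 S_INR in hs; rewrite S_INR; lra.
      congr vadd; congr vscale. rewrite e1; ring.
Qed.


Lemma lim_get (D : R -> R) (P : R -> Prop) s e :
  limit1_in D P (D s) s -> 0 < e ->
  exists al, 0 < al /\ forall x, P x -> Rabs (x - s) < al -> Rabs (D x - D s) < e.
Proof.
intros H He. destruct (H e He) as [al [Hal H2]]. exists al. split; [lra|].
intros x Px Hx. apply (H2 x). split; auto.
Qed.

Lemma compare (D dD : R -> R) a b :
  a < b ->
  (forall s, a <= s <= b -> limit1_in D (fun x => a <= x <= b) (D s) s) ->
  D a <= 0 ->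
  (forall s, a < s < b -> 0 < D s -> derivable_pt_lim D s (dD s) /\ dD s <= 0) ->
  forall s, a <= s <= b -> D s <= 0.
Proof.
intros Hab Hc Ha Hd s Hs. apply Rnot_lt_le. intro Hp.
assert (Hs1 : exists s1, a < s1 < b /\ 0 < D s1).
{ destruct (Rle_lt_or_eq_dec s b (proj2 Hs)) as [hl|he].
  - exists s. split; [|lra]. split; [|lra].
    destruct (Rle_lt_or_eq_dec a s (proj1 Hs)) as [h|h]; [lra| subst; lra].
  - subst s. destruct (lim_get D _ b (D b / 2) (Hc b ltac:(lra)) ltac:(lra)) as [al [Hal H]].
    set (s1 := Rmax ((a+b)/2) (b - al/2)).
    assert (h1 : (a+b)/2 <= s1) by apply Rmax_l.
    assert (h2 : b - al/2 <= s1) by apply Rmax_r.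
    assert (h3 : s1 < b).
    { unfold s1. apply Rmax_lub_lt; lra. }
    exists s1. split; [lra|].
    assert (Rabs (s1 - b) < al) by (rewrite Rabs_left; lra).
    specialize (H s1 ltac:(lra) H0). apply Rabs_def2 in H. lra. }
clear s Hs Hp. destruct Hs1 as [s1 [Hs1 Hp]].
set (E := fun x => a <= x <= s1 /\ D x <= 0).
assert (HB : bound E) by (exists s1; intros x [Hx _]; lra).
assert (HE : exists x, E x) by (exists a; split; [lra|auto]).
destruct (completeness E HB HE) as [s0 [Hub Hlub]].
assert (Has0 : a <= s0) by (apply Hub; split; [lra|auto]).
assert (Hs0s1 : s0 <= s1) by (apply Hlub; intros x [Hx _]; lra).
assert (HD0 : D s0 <= 0).
{ apply Rnot_lt_le. intro Hq.
  destruct (lim_get D _ s0 (D s0) (Hc s0 ltac:(lra)) Hq) as [al [Hal H]].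
  assert (Has : a < s0).
  { destruct (Rle_lt_or_eq_dec a s0 Has0) as [h|h]; [auto| subst; lra]. }
  set (al' := Rmin al (s0 - a) / 2).
  assert (Hm : 0 < Rmin al (s0 - a)) by (apply Rmin_glb_lt; lra).
  assert (Hm2 := Rmin_l al (s0 - a)).
  assert (hal' : 0 < al') by (unfold al'; lra).
  assert (hal2 : al' < al) by (unfold al'; lra).
  assert (s0 <= s0 - al').
  { apply Hlub. intros x [Hx Hx2]. apply Rnot_lt_le. intro hx.
    assert (x <= s0) by (apply Hub; split; auto).
    assert (Rabs (x - s0) < al) by (rewrite Rabs_left1; lra).
    specialize (H x ltac:(lra) H1). apply Rabs_def2 in H. lra. }
  lra. }
assert (Hpos : forall x, s0 < x <= s1 -> 0 < D x).
{ intros x Hx. apply Rnot_le_lt. intro h.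
  assert (x <= s0) by (apply Hub; split; [lra|auto]). lra. }
assert (Hlt : s0 < s1).
{ destruct (Rle_lt_or_eq_dec s0 s1 Hs0s1) as [h|h]; [auto| subst; lra]. }
destruct (lim_get D _ s0 (D s1 - D s0) (Hc s0 ltac:(lra)) ltac:(lra)) as [al [Hal H]].
set (s0' := s0 + Rmin al (s1 - s0) / 2).
assert (hm1 := Rmin_l al (s1 - s0)). assert (hm2 := Rmin_r al (s1 - s0)).
assert (hm3 : 0 < Rmin al (s1 - s0)) by (apply Rmin_glb_lt; lra).
assert (h0' : s0 < s0' < s1) by (unfold s0'; lra).
assert (Hlt1 : D s0' < D s1).
{ assert (Rabs (s0' - s0) < al) by (rewrite Rabs_right; unfold s0'; lra).
  specialize (H s0' ltac:(lra) H0). apply Rabs_def2 in H. lra. }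
destruct (Coquelicot.Derive.MVT_gen D s0' s1 dD) as [c [Hc1 Hc2]].
- rewrite Rmin_left; last lra. rewrite Rmax_right; last lra. intros x Hx.
  apply Coquelicot.Derive.is_derive_Reals.
  apply (Hd x); [lra| apply Hpos; lra].
- rewrite Rmin_left; last lra. rewrite Rmax_right; last lra. intros x Hx.
  destruct (Hd x ltac:(lra) (Hpos x ltac:(lra))) as [Hx1 _].
  apply derivable_continuous_pt. exists (dD x). exact Hx1.
- rewrite Rmin_left in Hc1; last lra. rewrite Rmax_right in Hc1; last lra.
  destruct (Hd c ltac:(lra) (Hpos c ltac:(lra))) as [_ Hc3].
  assert (dD c * (s1 - s0') <= 0) by (assert (0 <= s1 - s0') by lra; nra).
  lra.
Qed.

From Coquelicot Require Import Coquelicot.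
Open Scope R_scope.


Definition T4 (u : R) := 1 - u + u*u/2 - u*u*u/6 + u*u*u*u/24.
Definition wfun (mu C eps xi : R) :=
  (eps + C/(mu*mu)) * T4 (mu*xi) + C/(mu*mu) * (mu*xi - 1).
Definition wder (mu C eps xi : R) :=
  mu * ((eps + C/(mu*mu)) * (-1 + mu*xi - (mu*xi)*(mu*xi)/2 + (mu*xi)*(mu*xi)*(mu*xi)/6) + C/(mu*mu)).

Lemma w_deriv mu C eps a s : 0 < mu ->
  derivable_pt_lim (fun s => wfun mu C eps (s - a)) s (wder mu C eps (s - a)).
Proof.
move=> hm. apply is_derive_Reals. rewrite /wfun /wder /T4.
auto_derive; first by []. field. lra.
Qed.

Lemma w0 mu C eps : 0 < mu -> wfun mu C eps 0 = eps.
Proof. move=> hm; rewrite /wfun /T4; field; lra. Qed.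

Lemma T4_pos u : 0 < T4 u.
Proof.
rewrite /T4.
have h1 := pow2_ge_0 (u*u/2 - u + 1). have h2 := pow2_ge_0 (u - 1).
have h3 := pow2_ge_0 (u*u - 2*u).
nra.
Qed.

Lemma w_pos mu C eps xi : 0 < mu -> 0 < C -> 0 < eps -> 0 <= xi -> 0 < wfun mu C eps xi.
Proof.
move=> hm hC he hx. rewrite /wfun.
have hB : 0 < C/(mu*mu) by apply Rdiv_lt_0_compat; nra.
have hT := T4_pos (mu*xi). set u := mu * xi in hT *.
have hu : 0 <= u by rewrite /u; nra.
have hT1 : 1 - u <= T4 u.
{ rewrite /T4. have := pow2_ge_0 (u - 2). have : 0 <= u*u by nra. nra. }
case: (Rle_dec u 1) => h.
- nra.
- have : 0 <= C / (mu*mu) * (u - 1) by nra. nra.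
Qed.

Definition qf (u : R) := u/2 - u*u/12.

Lemma w_le mu C eps xi U : 0 < mu -> 0 < C -> 0 < eps ->
  0 <= mu * xi <= U -> U <= 2 -> (1 + C/(eps*mu*mu)) * qf U <= 1 ->
  wfun mu C eps xi <= eps.
Proof.
move=> hm hC he [hu1 hu2] hU hK. rewrite /wfun /T4.
set u := mu * xi in hu1 hu2 *.
set g := C / (eps*mu*mu) in hK *.
have hg : 0 < g by rewrite /g; apply Rdiv_lt_0_compat; [lra| apply Rmult_lt_0_compat; [apply Rmult_lt_0_compat|]; lra].
have eB : C/(mu*mu) = eps * g by rewrite /g; field; lra.
rewrite eB.
have E : (eps + eps * g) * (1 - u + u * u / 2 - u * u * u / 6 + u * u * u * u / 24) +
    eps * g * (u - 1) - eps = eps * u * ((1 + g) * (u/2 - u*u/6 + u*u*u/24) - 1) by field.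
have hp : u/2 - u*u/6 + u*u*u/24 <= qf u.
{ rewrite /qf. have : 0 <= u*u*(2-u) by apply Rmult_le_pos; nra. nra. }
have hq : qf u <= qf U.
{ rewrite /qf. have : 0 <= (U - u) * (6 - u - U) by apply Rmult_le_pos; lra. nra. }
have : (1 + g) * (u/2 - u*u/6 + u*u*u/24) - 1 <= 0.
{ have : (1+g) * (u/2 - u*u/6 + u*u*u/24) <= (1+g) * qf U by apply Rmult_le_compat_l; lra.
  lra. }
move=> h. have : eps * u * ((1 + g) * (u/2 - u*u/6 + u*u*u/24) - 1) <= 0.
{ have : 0 <= eps * u by nra. nra. }
lra.
Qed.

Lemma w_super mu C eps xi d : 0 < mu -> 0 < C -> 0 < eps -> 0 <= xi ->
  wfun mu C eps xi < d -> - mu * d + C * xi - wder mu C eps xi <= 0.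
Proof.
move=> hm hC he hx hd. move: hd; rewrite /wfun /wder /T4 => hd.
set B := C / (mu*mu) in hd *.
have eC : C = B * mu * mu by rewrite /B; field; lra.
rewrite eC. set u := mu * xi in hd *.
have hu : 0 <= u by rewrite /u; nra.
have hB : 0 < B by rewrite /B; apply Rdiv_lt_0_compat; nra.
have ex : B * mu * mu * xi = mu * B * u by rewrite /u; ring.
rewrite ex.
have h4 : 0 <= (eps + B) * (u*u*u*u/24) by have := pow2_ge_0 (u*u); nra.
have : - mu * d < - mu * ((eps + B) * (1 - u + u * u / 2 - u * u * u / 6 + u * u * u * u / 24) + B * (u - 1)) by nra.
nra.
Qed.


Lemma key (x s r : R) : 0 < x < 1 -> 0 < s -> s*s = 1 + x*x -> 0 < r <= 7/4 ->
  (4*x+r)*((s-x)/2 - x*(s-x)*(s-x)/3) <= 1.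
Proof.
intros. set (d := s - x).
assert (Hd: d*(s+x) = 1) by (unfold d; nra).
assert (0 < d) by (unfold d; nra).
assert (d < 1) by (unfold d; nra).
assert (Hx : 2*x*d = 1 - d*d) by (unfold d in *; nra).
assert (P : r*(2*d+d*d*d) <= 2 + 2*d*d + 2*d*d*d*d).
{ assert (0 <= 2*d+d*d*d) by (assert (0 <= d*d*d) by (repeat apply Rmult_le_pos; lra); lra).
  assert (r*(2*d+d*d*d) <= 7/4*(2*d+d*d*d)) by (apply Rmult_le_compat_r; lra).
  pose proof (pow2_ge_0 (d*d - 7/16*d)). pose proof (pow2_ge_0 (d - 108/100)). nra. }
assert (E : 6*d*((4*x+r)*(d/2 - x*d*d/3)) = (2 - 2*d*d + r*d)*(2+d*d)*d).
{ assert (4*x*d = 2*(1-d*d)) by lra. replace (6*d*((4*x+r)*(d/2 - x*d*d/3))) with ((4*x*d + r*d)*(3*d - (2*x*d)*d)) by field. rewrite H5 Hx. ring. }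
assert (d*(6*((4*x+r)*(d/2 - x*d*d/3)) - 6) <= 0) by nra.
assert (6*((4*x+r)*(d/2 - x*d*d/3)) - 6 <= 0).
{ destruct (Rle_dec (6*((4*x+r)*(d/2 - x*d*d/3)) - 6) 0); auto. nra. }
replace ((s-x)/2 - x*(s-x)*(s-x)/3) with (d/2 - x*d*d/3) by (unfold d; ring). lra.
Qed.

Lemma H_barrier eps lam C tau : 0 < eps -> 0 < tau -> lam < 0 ->
  Rabs lam * G_u eps lam C / 4 < 1 ->
  tau <= G_u eps lam C * (1 - alpha_u lam (G_u eps lam C)) ->
  0 < C /\ - lam * tau <= 2 /\
  (1 + C / (eps * (- lam) * (- lam))) * qf (- lam * tau) <= 1.
Proof.
move=> he ht hl hx htau.
set mu := - lam. have hmu : 0 < mu by rewrite /mu; lra.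
have ea : Rabs lam = mu by rewrite Rabs_left.
move: hx htau. rewrite /alpha_u ea.
set G := G_u eps lam C.
set x := mu * G / 4.
have ex2 : (lam * G / 4) ^ 2 = x * x .
{ rewrite /x /mu /=. field. }
rewrite ex2 => hx htau.
set s := sqrt (1 + x * x).
have hs2 : s * s = 1 + x * x by rewrite /s sqrt_sqrt; nra.
have hs0 : 0 < s by rewrite /s; apply sqrt_lt_R0; nra.
have hsx : x < s.
{ case: (Rle_dec s x) => h; last lra. nra. }
have e1 : 1 - (1 + x - s) = s - x by ring.
rewrite e1 in htau.
have hG : 0 < G by nra.
have hx0 : 0 < x by rewrite /x; nra.
set r := sqrt 3.
have hr0 : 0 < r by rewrite /r; apply sqrt_lt_R0; lra.
have hr1 : r <= 7/4.
{ rewrite /r. have -> : 7/4 = sqrt ((7/4)*(7/4)) by rewrite sqrt_square; lra.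
  apply sqrt_le_1_alt; lra. }
have eG : G = r * eps * mu / C by rewrite /G /G_u ea.
have hC : 0 < C.
{ case: (Rlt_le_dec 0 C) => // h. exfalso.
  have hp : 0 < r * eps * mu by apply Rmult_lt_0_compat; [apply Rmult_lt_0_compat|]; lra.
  case: (Rle_lt_or_eq_dec _ _ h) => h'.
  - have hi : / C < 0 by apply Rinv_lt_0_compat.
    have : r * eps * mu * / C < 0 by nra.
    rewrite /Rdiv in eG. lra.
  - rewrite h' /Rdiv Rinv_0 Rmult_0_r in eG. lra. }
have eg : C / (eps * mu * mu) = r / (4 * x).
{ rewrite /x eG. field. repeat split; lra. }
have hU : mu * tau <= 4 * x * (s - x).
{ have : mu * tau <= mu * (G * (s - x)) by apply Rmult_le_compat_l; lra.
  have -> : 4 * x * (s - x) = mu * (G * (s - x)) by rewrite /x; field.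
  done. }
have hU2 : 4 * x * (s - x) <= 2.
{ have hd : (s - x) * (s + x) = 1 by nra.
  have : 0 < s - x by lra. nra. }
split => //. split. lra.
rewrite eg.
have hq : qf (mu * tau) <= qf (4 * x * (s - x)).
{ rewrite /qf. have : 0 <= mu * tau by nra.
  have : 0 <= (4 * x * (s - x) - mu * tau) * (6 - mu * tau - 4 * x * (s - x)) by apply Rmult_le_pos; lra.
  nra. }
have hk := key x s r (conj hx0 hx) hs0 hs2 (conj hr0 hr1).
have e3 : (1 + r / (4 * x)) * qf (4 * x * (s - x)) = (4*x+r)*((s-x)/2 - x*(s-x)*(s-x)/3).
{ rewrite /qf. field. lra. }
have h1 : 0 < 1 + r / (4 * x).
{ have : 0 < r / (4*x) by apply Rdiv_lt_0_compat; lra.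
  lra. }
have : (1 + r / (4 * x)) * qf (mu * tau) <= (1 + r / (4 * x)) * qf (4 * x * (s - x)) by apply Rmult_le_compat_l; lra.
lra.
Qed.


Lemma cont_lim f (P : R -> Prop) t : continuity_pt f t -> limit1_in f P (f t) t.
Proof.
move=> H e he. case: (H e he) => al [hal H2]. exists al; split => // x [Px hx].
case: (Req_dec t x) => h.
- subst x. by simpl; rewrite R_dist_eq.
- by apply H2.
Qed.

Lemma deriv_lim f (P : R -> Prop) t l : derivable_pt_lim f t l -> limit1_in f P (f t) t.
Proof. move=> H. apply cont_lim, derivable_continuous_pt. by exists l. Qed.

Lemma sqrt_diff x y : 0 <= x -> 0 <= y -> Rabs (sqrt x - sqrt y) <= sqrt (Rabs (x - y)).
Proof.
move=> hx hy.
have sx := sqrt_sqrt x hx. have sy := sqrt_sqrt y hy.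
have px := sqrt_pos x. have py := sqrt_pos y.
rewrite -(sqrt_Rsqr_abs (sqrt x - sqrt y)). apply sqrt_le_1_alt.
rewrite /Rsqr.
case: (Rle_dec y x) => h.
- have : sqrt y <= sqrt x by apply sqrt_le_1_alt.
  rewrite Rabs_right; last lra. nra.
- have : sqrt x <= sqrt y by apply sqrt_le_1_alt; lra.
  rewrite Rabs_left; last lra. nra.
Qed.

Lemma lim_sqrt g (P : R -> Prop) t : (forall x, 0 <= g x) ->
  limit1_in g P (g t) t -> limit1_in (fun x => sqrt (g x)) P (sqrt (g t)) t.
Proof.
move=> hg H e he. case: (H (e * e) ltac:(nra)) => al [hal H2].
exists al; split => // x hx. have := H2 x hx. rewrite /R_dist /= => h.
apply (Rle_lt_trans _ (sqrt (Rabs (g x - g t)))); first exact: sqrt_diff.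
rewrite -(sqrt_square e); last lra. apply sqrt_lt_1_alt. split; [exact: Rabs_pos| exact h].
Qed.


Lemma vdot_split M (e p m q : vec M) :
  vdot e (vsub p q) = vdot e (vsub p m) + vdot e (vsub m q).
Proof. rewrite !vdot_sub_r; ring. Qed.

Lemma lin_deriv (c a d t : R) : derivable_pt_lim (fun x => c + (x - a) * d) t d.
Proof. apply is_derive_Reals. auto_derive; first by []. ring. Qed.

Lemma piece (M : nat) (fU : mode -> vec M -> vec M) (tau eps : R)
  (pi : list mode) (y : vec M) (Y : R -> vec M) (z : vec M) (j : nat) (lamj Cj Lj : R) :
  0 < tau -> 0 < eps -> (j < length pi)%nat ->
  exact_traj fU tau pi y Y ->
  (forall s, INR j * tau <= s <= INR j * tau + tau -> inS (Y s)) ->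
  (forall s, INR j * tau <= s <= INR j * tau + tau -> inS (euler_traj fU tau pi s z)) ->
  osl_on_S (fU (List.nth j pi (0,0))) lamj ->
  lipschitz_on_S (fU (List.nth j pi (0,0))) Lj ->
  (forall w, inS w -> Lj * vnorm (fU (List.nth j pi (0,0)) w) <= Cj) ->
  lamj < 0 -> 0 < Cj -> - lamj * tau <= 2 ->
  (1 + Cj / (eps * (- lamj) * (- lamj))) * qf (- lamj * tau) <= 1 ->
  vnorm (vsub (Y (INR j * tau)) (euler_traj fU tau pi (INR j * tau) z)) <= eps ->
  forall s, INR j * tau <= s <= INR j * tau + tau ->
  vnorm (vsub (Y s) (euler_traj fU tau pi s z)) <= eps.
Proof.
move=> ht he hj [_ [HYc HYd]] HYS HES Hosl Hlip HC hl hC hU hK H0.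
set a := INR j * tau in HYS HES H0 *.
set u := List.nth j pi (0,0) in Hosl Hlip HC HYd *.
set mu := - lamj in hU hK *. have hmu : 0 < mu by rewrite /mu; lra.
set E := euler_traj fU tau pi a z.
set F := fU u E.
set Yt := fun s => vadd E (vscale (s - a) F).
set eY := fun s => vsub (Y s) (Yt s).
have hpiece : forall s, a <= s <= a + tau -> euler_traj fU tau pi s z = Yt s.
{ move=> s hs. rewrite /Yt /E /F /u /a. apply euler_piece => //.
  rewrite S_INR. rewrite /a in hs. lra. }
have hES : inS E by rewrite /E; apply HES; lra.
have hdom : forall s, a <= s <= a + tau -> 0 <= s <= INR (length pi) * tau.
{ have h1 : (INR (S j) <= INR (length pi)) by apply le_INR; apply/leP.
  have h0 := pos_INR j. rewrite S_INR in h1. move=> s hs. rewrite /a in hs.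
  split; nra. }
set phi := fun s => vdot (eY s) (eY s).
set D := fun s => sqrt (phi s) - wfun mu Cj eps (s - a).
set dphi := fun s => \big[Rplus/0]_(i < M)
    ((fU u (Y s) i - F i) * eY s i + eY s i * (fU u (Y s) i - F i)).
set dD := fun s => / (2 * sqrt (phi s)) * dphi s - wder mu Cj eps (s - a).
have Hcomp := compare D dD a (a + tau) ltac:(lra).
have HDle : forall s, a <= s <= a + tau -> D s <= 0.
{ apply Hcomp.
  - move=> s hs. rewrite /D. apply limit_minus.
    + apply lim_sqrt; first by move=> x; apply vdot_ge0.
      rewrite /phi /vdot. apply (bs_lim _ _ (fun i x => eY x i * eY x i)) => i.
      apply limit_mul; rewrite /eY /vsub /Yt /vadd /vscale;
      (apply limit_minus; [apply (limit1_imp _ (fun s => 0 <= s <= INR (length pi) * tau)); [move=> x hx; apply hdom; lra| apply HYc; apply hdom; lra]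
                          | exact: (deriv_lim _ _ _ _ (lin_deriv (E i) a (F i) s))]).
    + exact: (deriv_lim _ _ _ _ (w_deriv mu Cj eps a s hmu)).
  - rewrite /D /phi. have -> : eY a = vsub (Y a) (euler_traj fU tau pi a z).
      by rewrite /eY hpiece //; lra.
    rewrite Rminus_eq_0 w0 //. rewrite /vnorm in H0. lra.
  - move=> s hs hDs.
    have hsd : INR j * tau < s < INR j.+1 * tau by rewrite S_INR; rewrite /a in hs; lra.
    have hY := HYd j s hj hsd.
    have he_i : forall i, derivable_pt_lim (fun x => eY x i) s (fU u (Y s) i - F i).
    { move=> i. rewrite /eY /vsub /Yt /vadd /vscale.
      apply (derivable_pt_lim_minus (fun x => Y x i) (fun x => E i + (x - a) * F i)); [exact: hY| exact: lin_deriv]. }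
    have hphi : derivable_pt_lim phi s (dphi s).
    { rewrite /phi /vdot /dphi.
      apply (bs_deriv _ _ (fun i x => eY x i * eY x i) (fun i x => (fU u (Y s) i - F i) * eY x i + eY x i * (fU u (Y s) i - F i))) => i.
      apply (derivable_pt_lim_mult (fun x => eY x i) (fun x => eY x i)); exact: he_i. }
    have hxi : 0 <= s - a by lra.
    have hwpos := w_pos mu Cj eps (s - a) hmu hC he hxi.
    have hdel : wfun mu Cj eps (s - a) < sqrt (phi s) by rewrite /D in hDs; lra.
    have hphipos : 0 < phi s.
    { case: (Rlt_le_dec 0 (phi s)) => // h0.
      have h00 : phi s = 0 by have := vdot_ge0 _ (eY s); rewrite /phi in h0 *; lra.
      rewrite h00 sqrt_0 in hdel. lra. }
    have hsq : derivable_pt_lim (fun x => sqrt (phi x)) s (/ (2 * sqrt (phi s)) * dphi s).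
    { apply (derivable_pt_lim_comp phi sqrt) => //. exact: derivable_pt_lim_sqrt. }
    split.
    + apply (derivable_pt_lim_minus (fun x => sqrt (phi x)) (fun x => wfun mu Cj eps (x - a))) => //.
      exact: w_deriv.
    + set d := sqrt (phi s) in hdel hsq *.
      have hd : d * d = phi s by rewrite /d sqrt_sqrt //; lra.
      have hd0 : 0 < d by lra.
      have edphi : dphi s = 2 * vdot (eY s) (vsub (fU u (Y s)) F).
      { rewrite /dphi /vdot -bs_scal. apply eq_bigr => i _. rewrite /vsub. ring. }
      have hYs : inS (Y s) by apply HYS; lra.
      have hYts : inS (Yt s) by rewrite -hpiece; [apply HES|]; lra.
      have hV : vdot (eY s) (vsub (fU u (Y s)) F) <= lamj * (d*d) + Cj * (s - a) * d.
      { rewrite (vdot_split _ _ _ (fU u (Yt s))).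
        have h1 : vdot (eY s) (vsub (fU u (Y s)) (fU u (Yt s))) <= lamj * (d*d).
        { rewrite vdot_sym. have := Hosl (Y s) (Yt s) hYs hYts.
          have -> : vnorm (vsub (Y s) (Yt s)) ^ 2 = d * d.
          { change (vnorm (eY s) ^ 2 = d * d). rewrite /= /d /phi /vnorm. ring. }
          done. }
        have h2 : vdot (eY s) (vsub (fU u (Yt s)) F) <= Cj * (s - a) * d.
        { apply (Rle_trans _ (vnorm (eY s) * vnorm (vsub (fU u (Yt s)) F))); first exact: vcs.
          have hL := Hlip (Yt s) E hYts hES.
          have eS : vsub (Yt s) E = vscale (s - a) F.
          { apply functional_extensionality => i. rewrite /vsub /Yt /vadd /vscale. ring. }
          rewrite eS vnorm_scale Rabs_right in hL; last lra.
          have hF := HC E hES. rewrite -/F in hF hL.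
          have : vnorm (vsub (fU u (Yt s)) F) <= Cj * (s - a) by nra.
          have -> : vnorm (eY s) = d by [].
          move=> h3. have := Rmult_le_compat_l d _ _ (Rlt_le _ _ hd0) h3. lra. }
        lra. }
      rewrite /dD -/d edphi.
      have -> : / (2 * d) * (2 * vdot (eY s) (vsub (fU u (Y s)) F)) = vdot (eY s) (vsub (fU u (Y s)) F) / d by field; lra.
      have hVd : vdot (eY s) (vsub (fU u (Y s)) F) / d <= lamj * d + Cj * (s - a).
      { apply (Rmult_le_reg_r d) => //.
        have -> : vdot (eY s) (vsub (fU u (Y s)) F) / d * d = vdot (eY s) (vsub (fU u (Y s)) F) by field; lra.
        nra. }
      have := w_super mu Cj eps (s - a) d hmu hC he hxi hdel.
      rewrite /mu in hVd *. lra. }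
move=> s hs. rewrite hpiece //.
have := HDle s hs. rewrite /D /phi => h.
have : wfun mu Cj eps (s - a) <= eps.
{ apply (w_le mu Cj eps (s - a) (mu * tau)) => //. split; [|apply Rmult_le_compat_l]; nra. }
move=> h2. rewrite /vnorm. rewrite /eY in h. lra.
Qed.

From mathcomp Require Import zify.
Open Scope R_scope.


Lemma find_piece tau t : 0 < tau -> forall n, (1 <= n)%N -> 0 <= t <= INR n * tau ->
  exists j, (j < n)%N /\ INR j * tau <= t <= INR j * tau + tau.
Proof.
move=> ht; elim => [|n IH] hn htn; first by [].
case: (Rle_dec t (INR n * tau)) => h.
- case: n IH hn htn h => [|n] IH hn htn h.
  + exists 0%N. split => //. simpl in *. lra.
  + have [j [hj1 hj2]] := IH ltac:(lia) ltac:(lra). exists j; split => //; lia.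
- exists n. split; first lia. rewrite S_INR in htn. lra.
Qed.

Lemma grid_init M (K : nat) (eps : R) (y z : vec M) : (1 <= M)%N -> 0 < eps ->
  sqrt (INR M) / (2 * eps) <= INR K -> in_cell K z y -> vnorm (vsub y z) <= eps.
Proof.
move=> hM he hK hc.
have hM1 : 1 <= INR M by (have := le_INR 1 M ltac:(apply/leP; exact hM)); rewrite /=.
have hsM : 0 < sqrt (INR M) by apply sqrt_lt_R0; lra.
have hKp : 0 < INR K.
{ apply (Rlt_le_trans _ (sqrt (INR M) / (2 * eps))) => //. apply Rdiv_lt_0_compat; lra. }
have hK2 : sqrt (INR M) <= 2 * eps * INR K.
{ have := Rmult_le_compat_l (2 * eps) _ _ ltac:(lra) hK.
  have -> : 2 * eps * (sqrt (INR M) / (2 * eps)) = sqrt (INR M) by field; lra. done. }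
have hMsq : INR M <= (2 * eps * INR K) * (2 * eps * INR K).
{ rewrite -(sqrt_sqrt (INR M)); last lra. apply Rmult_le_compat; lra. }
set c := 1 / (2 * INR K).
have hdot : vdot (vsub y z) (vsub y z) <= INR M * (c * c).
{ rewrite -bs_const /vdot. apply bs_le => i. rewrite /vsub.
  have := hc i. rewrite -/c. move=> hi.
  have : 0 <= (c - (y i - z i)) * (c + (y i - z i)) by apply Rmult_le_pos; lra.
  nra. }
have hcc : INR M * (c * c) <= eps * eps.
{ rewrite /c. have -> : INR M * (1 / (2 * INR K) * (1 / (2 * INR K))) = INR M / ((2 * INR K) * (2 * INR K)) by field; lra.
  apply (Rmult_le_reg_r ((2 * INR K) * (2 * INR K))); first nra.
  have -> : INR M / (2 * INR K * (2 * INR K)) * (2 * INR K * (2 * INR K)) = INR M by field; lra.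
  nra. }
rewrite /vnorm -(sqrt_square eps); last lra. apply sqrt_le_1_alt. lra.
Qed.

Theorem theorem1
  (M k : nat) (Len sigma tau eps : R)
  (U : list mode) (f : vec M -> vec M)
  (Lc lam Cc : mode -> R) (K : nat)
  (y z : vec M) (pi : list mode) (Y : R -> vec M) (t : R) :
  (1 <= M)%nat -> (1 <= k)%nat ->
  0 < Len -> 0 < sigma -> 0 < tau -> 0 < eps ->
  (forall u, In u U -> 0 <= fst u <= 1 /\ 0 <= snd u <= 1) ->
  let h := Len / INR (M + 1) in
  let fU := fu h sigma f in
  (forall u, In u U -> lipschitz_on_S (fU u) (Lc u)) ->
  (forall u, In u U -> is_OSL_constant (fU u) (lam u)) ->
  (forall u, In u U -> is_C_constant (fU u) (Lc u) (Cc u)) ->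
  (forall pi' y' Y', pattern_in U k pi' -> inS y' -> exact_traj fU tau pi' y' Y' ->
     forall t', 0 <= t' <= INR k * tau -> inS (Y' t')) ->
  (forall pi' z', pattern_in U k pi' -> is_center K z' ->
     forall t', 0 <= t' <= INR k * tau -> inS (euler_traj fU tau pi' t' z')) ->
  sqrt (INR M) / (2 * eps) <= INR K ->
  (forall u, In u U ->
     let G := G_u eps (lam u) (Cc u) in
     lam u < 0 /\ Rabs (lam u) * G / 4 < 1 /\ tau <= G * (1 - alpha_u (lam u) G)) ->
  inS y -> is_representative K y z ->
  pattern_in U k pi -> exact_traj fU tau pi y Y ->
  0 <= t <= INR k * tau ->
  vnorm (vsub (Y t) (euler_traj fU tau pi t z)) <= eps.
Proof.
move=> hM hk hLen hsig htau heps hUb h fU hLip hOSL hCc hYS hES hK hH hyS [hcen hcell] hpat hex ht.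
have hpat' := hpat. case: hpat' => hlen hin.
have hex' := hex. case: hex' => hY0 _.
have Hpiece : forall j, (j < k)%N ->
  vnorm (vsub (Y (INR j * tau)) (euler_traj fU tau pi (INR j * tau) z)) <= eps ->
  forall s, INR j * tau <= s <= INR j * tau + tau ->
  vnorm (vsub (Y s) (euler_traj fU tau pi s z)) <= eps.
{ move=> j hj H0 s hs.
  have hjl : (j < length pi)%N by rewrite hlen.
  set u := List.nth j pi (0, 0).
  have huU : In u U by apply hin; apply nth_In; apply/ltP.
  have [hl [hx htu]] := hH u huU.
  have [hC [hU2 hKb]] := H_barrier eps (lam u) (Cc u) tau heps htau hl hx htu.
  have hdomk : forall s, INR j * tau <= s <= INR j * tau + tau -> 0 <= s <= INR k * tau.
  { have h1 : INR (S j) <= INR k by apply le_INR; apply/leP.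
    have h0 := pos_INR j. rewrite S_INR in h1. move=> s' hs'. split; nra. }
  apply (piece M fU tau eps pi y Y z j (lam u) (Cc u) (Lc u)) => //.
  - move=> s' hs'. apply (hYS pi y Y) => //. exact: hdomk.
  - move=> s' hs'. apply (hES pi z) => //. exact: hdomk.
  - exact: (proj1 (hOSL u huU)).
  - exact: hLip.
  - move=> w hw. have [hub _] := hCc u huU. apply hub. by exists w. }
have Hstart : forall j, (j <= k)%N ->
  vnorm (vsub (Y (INR j * tau)) (euler_traj fU tau pi (INR j * tau) z)) <= eps.
{ elim => [|j IH] hj.
  - rewrite /= Rmult_0_l hY0 euler_at0 //. exact: (grid_init M K eps y z hM heps hK hcell).
  - have hjk : (j < k)%N by [].
    have := Hpiece j hjk (IH (ltnW hjk)) (INR j.+1 * tau).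
    rewrite S_INR. apply. lra. }
have [j [hj hjt]] := find_piece tau t htau k hk ht.
exact: (Hpiece j hj (Hstart j (ltnW hj)) t hjt).
Qed.
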